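(* Let $t\geq 4$ be an even integer and let $a,b,c$ be positive integers with $a\geq 2$ and $a+b=t-1$. Then the multiset $\{1^a,2^b,t^c\}$ admits a linear realization.
   Context: $\{1^a,2^b,t^{c}\}$ is the multiset with $a$ copies of $1$, $b$ copies of $2$ and $c$ copies of $t$. For a multiset $L$ of positive integers with $|L|=v-1$, each at most $v-1$, a linear realization of $L$ is a Hamiltonian path $[x_0,\dots,x_{v-1}]$ of the complete graph on $\{0,\dots,v-1\}$ such that the multiset $\{|x_i-x_{i+1}| : i=0,\dots,v-2\}$ equals $L$. *)

(* Defs.v *)
From mathcomp Require Import all_boot.

Definition absdiff (m n : nat) : nat := (m - n) + (n - m).

Definition diffs (s : seq nat) : seq nat :=
  match s with
  | [::] => [::]
  | x :: s' => pairmap absdiff x s'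
  end.

(* s is a linear realization of the multiset L (given as a list,
   compared up to permutation) on the vertex set {0,...,v-1},
   where v = size L + 1: s lists every vertex exactly once
   (Hamiltonian path of K_v) and its edge lengths form L. *)
Definition linear_realization (L : seq nat) (s : seq nat) : Prop :=
  perm_eq s (iota 0 (size L).+1) /\ perm_eq (diffs s) L.

Definition ms12t (a b t c : nat) : seq nat := nseq a 1 ++ nseq b 2 ++ nseq c t.

(* Main.v *)
Require Import Defs.
From mathcomp Require Import all_boot zify.

Lemma absdiffC m n : absdiff m n = absdiff n m.
Proof. by rewrite /absdiff addnC. Qed.

Lemma absdiffDr m n k : absdiff (m + k) (n + k) = absdiff m n.
Proof. by rewrite /absdiff !subnDr. Qed.

Lemma absdiffDl k m n : absdiff (k + m) (k + n) = absdiff m n.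
Proof. by rewrite /absdiff !subnDl. Qed.

Lemma diffs_cat x s1 y s2 :
  diffs (x :: s1 ++ y :: s2) = diffs (x :: s1) ++ absdiff (last x s1) y :: diffs (y :: s2).
Proof. by rewrite /= pairmap_cat. Qed.

Lemma diffs_map_add k s : diffs (map (addn k) s) = diffs s.
Proof.
case: s => // x s /=; elim: s x => // y s IH x /=.
by rewrite absdiffDl IH.
Qed.

Lemma diffs_mirror K s : all (fun x => x <= K) s ->
  diffs (map (fun x => K - x) s) = diffs s.
Proof.
case: s => // x s /=; elim: s x => // y s IH x /= /and3P[hx hy hs].
rewrite IH ?hy ?hs //; congr (_ :: _); rewrite /absdiff; lia.
Qed.

Lemma diffs_rcons z w x :
  diffs (rcons (z :: w) x) = rcons (diffs (z :: w)) (absdiff (last z w) x).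
Proof. by rewrite /= -cats1 pairmap_cat cats1. Qed.

Lemma diffs_rev s : diffs (rev s) = rev (diffs s).
Proof.
elim: s => // x [|y s] IH //.
rewrite rev_cons.
case E: (rev (y :: s)) => [|z w]; first by move/(congr1 size): E; rewrite size_rev.
have Ly : last z w = y.
  by have := congr1 (last 0) E; rewrite /= rev_cons last_rcons.
rewrite diffs_rcons -E IH Ly /= rev_cons absdiffC //.
Qed.

Definition ms p q := nseq p 1 ++ nseq q 2.

Lemma ms_cons2 p q : perm_eq (2 :: ms p q) (ms p q.+1).
Proof. by rewrite /ms -cat1s perm_catCA. Qed.

Lemma ms_cat p q p' q' : perm_eq (ms p q ++ ms p' q') (ms (p + p') (q + q')).
Proof.
by rewrite /ms !nseqD -!catA perm_cat2l perm_catCA.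
Qed.

Lemma perm_of_count (s1 s2 : seq nat) :
  (forall x, count_mem x s1 = count_mem x s2) -> perm_eq s1 s2.
Proof. by move=> H; apply/allP => x _; apply/eqP; apply: H. Qed.

Lemma iota1 n : map (addn 1) (iota 0 n) = iota 1 n.
Proof. by rewrite -iotaDl. Qed.

Lemma Wpath n : 2 <= n -> exists X, perm_eq (0 :: X) (iota 0 n) /\ last 0 X = 1 /\
  perm_eq (diffs (0 :: X)) (ms 1 (n - 2)).
Proof.
elim: n => // n IH; rewrite ltnS leq_eqVlt => /orP[/eqP <-|].
  by exists [:: 1].
move=> hn; move: (IH hn) => [X [pX [lX dX]]].
case/lastP: X pX lX dX => [|X0 x] pX; first by [].
rewrite last_rcons => Ex dX; subst x.
exists (map (addn 1) (rev (0 :: rcons X0 1))); split; [|split].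
- rewrite [iota 0 n.+1]/= perm_cons -iota1; apply: perm_map.
  by rewrite perm_rev.
- by rewrite -[0 :: rcons X0 1]/(rcons (0 :: X0) 1) rev_rcons map_cons rev_cons map_rcons /= last_rcons.
- have E : 0 :: rcons X0 1 = rcons (0::X0) 1 by [].
  rewrite E rev_rcons /=.
  have -> : pairmap absdiff 2 [seq 1 + i | i <- rev (0 :: X0)] =
    diffs (map (addn 1) (1 :: rev (0 :: X0))) by [].
  rewrite diffs_map_add -rev_rcons diffs_rev.
  have -> : n.+1 - 2 = (n - 2).+1 by lia.
  apply: (perm_trans _ (ms_cons2 _ _)).
  by rewrite perm_cons perm_rev.
Qed.

Lemma Qpath n j : 1 <= n -> j <= n - 2 -> exists X, perm_eq (0 :: X) (iota 0 n) /\
  perm_eq (diffs (0 :: X)) (ms (n.-1 - j) j).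
Proof.
elim: n j => // n IH j _ hj.
have [En|n0] := eqVneq n 0.
  by exists [::]; rewrite En; have -> : j = 0 by lia.
have [ej|nej] := eqVneq j (n - 1).
  have [X [pX [_ dX]]] := @Wpath n.+1 ltac:(lia).
  exists X; split => //.
  have -> : n.+1.-1 - j = 1 by lia.
  have -> : j = n.+1 - 2 by lia.
  exact: dX.
have [X [pX dX]] := IH j ltac:(lia) ltac:(lia).
exists (map (addn 1) (0 :: X)); split.
  by rewrite [iota 0 n.+1]/= perm_cons -iota1; apply: perm_map.
have -> : diffs (0 :: map (addn 1) (0 :: X)) = 1 :: diffs (map (addn 1) (0 :: X)) by [].
rewrite diffs_map_add.
have -> : n.+1.-1 - j = (n.-1 - j).+1 by lia.
by rewrite /ms /= perm_cons.
Qed.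

Lemma mirror_iota n : perm_eq (map (fun x => n.-1 - x) (iota 0 n)) (iota 0 n).
Proof.
apply: uniq_perm; last first.
- move=> x; rewrite mem_iota; apply/mapP/idP.
    by move=> [y]; rewrite mem_iota => hy ->; lia.
  by move=> hx; exists (n.-1 - x); rewrite ?mem_iota; lia.
- exact: iota_uniq.
rewrite map_inj_in_uniq ?iota_uniq // => x y; rewrite !mem_iota; lia.
Qed.

Lemma diffs_catR X0 x y Y0 :
  diffs (rcons X0 x ++ y :: Y0) = diffs (rcons X0 x) ++ absdiff x y :: diffs (y :: Y0).
Proof.
case: X0 => [|z X1] //.
by rewrite rcons_cons cat_cons diffs_cat last_rcons.
Qed.

Lemma glue n1 n2 XB y0 Y1 : 1 <= n1 -> perm_eq (0 :: XB) (iota 0 n2) ->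
  perm_eq (y0 :: Y1) (iota 0 n1) ->
  [/\ map (addn n1) (rev (0 :: XB)) != [::],
   perm_eq (map (addn n1) (rev (0 :: XB)) ++ map (fun x => n1.-1 - x) (y0 :: Y1))
     (iota 0 (n1 + n2)),
   all (fun r => n1 <= r) (map (addn n1) (rev (0 :: XB))),
   all (fun r => r < n1) (map (fun x => n1.-1 - x) (y0 :: Y1)) &
   perm_eq (diffs (map (addn n1) (rev (0 :: XB)) ++ map (fun x => n1.-1 - x) (y0 :: Y1)))
     (diffs (0 :: XB) ++ absdiff n1 (n1.-1 - y0) :: diffs (y0 :: Y1))].
Proof.
move=> h1 pB pA.
have allA : all (fun x => x <= n1.-1) (y0 :: Y1).
  apply/allP => x; rewrite (perm_mem pA) mem_iota; lia.
split.
- by rewrite map_rev rev_cons; case: (rev _).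
- rewrite iotaD add0n perm_catC; apply: perm_cat.
  + exact: perm_trans (perm_map _ pA) (mirror_iota _).
  + rewrite -[n1]addn0 iotaDl addn0 map_rev perm_rev; exact: perm_map.
- by rewrite all_map; apply/allP => x _ /=; rewrite leq_addr.
- by rewrite all_map; apply/allP => x _ /=; lia.
- rewrite rev_cons map_rcons addn0 map_cons diffs_catR.
  have -> : rcons [seq n1 + i | i <- rev XB] n1 = map (addn n1) (rev (0::XB)).
    by rewrite rev_cons map_rcons addn0.
  have -> : n1.-1 - y0 :: map (fun x => n1.-1 - x) Y1 = map (fun x => n1.-1 - x) (y0::Y1) by [].
  rewrite diffs_map_add diffs_rev (diffs_mirror _ _ allA).
  by apply: perm_cat; rewrite ?perm_rev.
Qed.

Lemma sigma_ex t s b : 4 <= t -> s < t -> 1 <= b -> b <= t - 3 ->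
  exists X Y, [/\ X != [::], perm_eq (X ++ Y) (iota 0 t), all (fun r => s <= r) X,
    all (fun r => r < s) Y & perm_eq (diffs (X ++ Y)) (ms (t.-1 - b) b)].
Proof.
move=> ht hs hb1 hb2.
have [s0|spos] := eqVneq s 0.
  have [XQ [pQ dQ]] := @Qpath t b ltac:(lia) ltac:(lia).
  exists (0 :: XQ), [::]; rewrite cats0; split => //.
  by apply/allP => x _; rewrite s0.
have tE : t = s + (t - s) by lia.
have [hcase|hcase] := leqP b ((t - s - 2) + (s - 2)).
  pose jB := minn b (t - s - 2); pose jA := b - jB.
  have [XB [pB dB]] := @Qpath (t - s) jB ltac:(lia) ltac:(lia).
  have [XA [pA dA]] := @Qpath s jA ltac:(lia) ltac:(lia).
  have [G1 G2 G3 G4 G5] := @glue s (t - s) XB 0 XA ltac:(lia) pB pA.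
  do 2 eexists; split; [exact: G1| rewrite tE; exact: G2 | exact: G3 | exact: G4 |].
  apply: (perm_trans G5).
  have -> : absdiff s (s.-1 - 0) = 1 by rewrite /absdiff; lia.
  have dA' : perm_eq (1 :: diffs (0 :: XA)) (ms (s.-1 - jA).+1 jA) by rewrite /ms /= perm_cons.
  apply: (perm_trans (perm_cat dB dA')); apply: perm_trans (ms_cat _ _ _ _) _.
  have -> : t.-1 - b = (t - s).-1 - jB + (s.-1 - jA).+1 by lia.
  by rewrite /jA subnKC ?geq_minl.
have [XB [pB [_ dB]]] := @Wpath (t - s) ltac:(lia).
have [XA [pA [lA dA]]] := @Wpath s ltac:(lia).
case/lastP: XA pA lA dA => [|XA0 x] pA; first by [].
rewrite last_rcons => Ex dA; subst x.
have E : rev (0 :: rcons XA0 1) = 1 :: rev (0 :: XA0).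
  by rewrite -[0 :: rcons XA0 1]/(rcons (0 :: XA0) 1) rev_rcons.
have pA' : perm_eq (1 :: rev (0 :: XA0)) (iota 0 s) by rewrite -E perm_rev.
have [G1 G2 G3 G4 G5] := @glue s (t - s) XB 1 (rev (0 :: XA0)) ltac:(lia) pB pA'.
do 2 eexists; split; [exact: G1| rewrite tE; exact: G2 | exact: G3 | exact: G4 |].
apply: (perm_trans G5).
have -> : absdiff s (s.-1 - 1) = 2 by rewrite /absdiff; lia.
rewrite -E diffs_rev.
have dA' : perm_eq (2 :: rev (diffs (0 :: rcons XA0 1))) (ms 1 (s - 2).+1).
  by apply: perm_trans (ms_cons2 _ _); rewrite perm_cons perm_rev.
apply: (perm_trans (perm_cat dB dA')); apply: perm_trans (ms_cat _ _ _ _) _.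
have -> : t.-1 - b = 1 + 1 by lia.
have -> : b = t - s - 2 + (s - 2).+1 by lia.
done.
Qed.

Section Cols.
Variables t v : nat.

Definition kk r := (v.-1 - r) %/ t.
Definition col r := [seq r + t * i | i <- iota 0 (kk r).+1].
Definition top r := r + t * kk r.
Definition ocol (up : bool) r := if up then col r else rev (col r).

Fixpoint build (up : bool) (sg : seq nat) : seq nat :=
  if sg is r :: sg' then ocol up r ++ build (~~ up) sg' else [::].

Fixpoint jumps (up : bool) (sg : seq nat) : seq nat :=
  match sg with
  | r :: ((r' :: _) as sg') =>
      absdiff (if up then top r else r) (if up then top r' else r') :: jumps (~~ up) sg'
  | _ => [::]
  end.

Lemma col_cons r : col r = r :: [seq r + t * i | i <- iota 1 (kk r)].
Proof. by rewrite /col /= muln0 addn0. Qed.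

Lemma col_rcons r : col r = rcons [seq r + t * i | i <- iota 0 (kk r)] (top r).
Proof. by rewrite /col -addn1 iotaD map_cat add0n /= cats1. Qed.

Lemma ocol_last up r : last 0 (ocol up r) = if up then top r else r.
Proof.
case: up; rewrite /ocol; first by rewrite col_rcons last_rcons.
by rewrite col_cons rev_cons last_rcons.
Qed.

Lemma ocol_head up r : head 0 (ocol up r) = if up then r else top r.
Proof.
case: up; rewrite /ocol; first by rewrite col_cons.
by rewrite col_rcons rev_rcons.
Qed.

Lemma ocol_ne up r : ocol up r != [::].
Proof. by case: up; rewrite /ocol col_cons ?rev_cons //; case: (rev _). Qed.

Lemma diffs_iota_lin r k n : diffs [seq r + t * i | i <- iota k n] = nseq n.-1 t.
Proof.
elim: n k => [|[|n] IH] k //.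
have -> : [seq r + t * i | i <- iota k n.+2] =
   (r + t * k) :: [seq r + t * i | i <- iota k.+1 n.+1] by [].
have -> : diffs (r + t * k :: [seq r + t * i | i <- iota k.+1 n.+1]) =
  absdiff (r + t*k) (r + t*k.+1) :: diffs [seq r + t * i | i <- iota k.+1 n.+1] by [].
rewrite IH /=; congr (_ :: _); rewrite mulnS /absdiff; lia.
Qed.

Lemma diffs_ocol up r : diffs (ocol up r) = nseq (kk r) t.
Proof.
by case: up; rewrite /ocol ?diffs_rev diffs_iota_lin ?rev_nseq.
Qed.

Lemma diffs_cat_ne A B : A != [::] -> B != [::] ->
  diffs (A ++ B) = diffs A ++ absdiff (last 0 A) (head 0 B) :: diffs B.
Proof. by case: A => [|a A] // _; case: B => [|b B] // _; rewrite cat_cons diffs_cat. Qed.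

Lemma build_head up r sg : head 0 (build up (r :: sg)) = head 0 (ocol up r).
Proof. by rewrite /=; case E: (ocol up r) (ocol_ne up r) => [|x l]. Qed.

Lemma build_ne up r sg : build up (r :: sg) != [::].
Proof. by rewrite /=; case E: (ocol up r) (ocol_ne up r) => [|x l]. Qed.

Lemma diffs_build up sg :
  perm_eq (diffs (build up sg)) (nseq (sumn [seq kk r | r <- sg]) t ++ jumps up sg).
Proof.
elim: sg up => [|r sg IH] up //.
case: sg IH => [|r' sg] IH.
  by rewrite /= cats0 diffs_ocol addn0 cats0.
rewrite [build _ _]/= diffs_cat_ne ?ocol_ne ?build_ne // build_head ocol_last ocol_head.
rewrite diffs_ocol [sumn _]/= nseqD -catA perm_cat2l.
have -> : (if ~~ up then r' else top r') = (if up then top r' else r') by case: up.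
have -> : jumps up [:: r, r' & sg] = absdiff (if up then top r else r) (if up then top r' else r')
   :: jumps (~~ up) (r' :: sg) by [].
apply: (@perm_trans _ (absdiff (if up then top r else r) (if up then top r' else r')
   :: (nseq (sumn [seq kk r | r <- r' :: sg]) t ++ jumps (~~ up) (r' :: sg)))).
  by rewrite perm_cons IH.
by rewrite -cat1s perm_catCA.
Qed.

End Cols.

Lemma col_mem t v r x : 0 < t -> r < t -> r < v ->
  (x \in col t v r) = (x < v) && (x %% t == r).
Proof.
move=> t0 rt rv; rewrite /col /kk; apply/mapP/andP.
  move=> [i]; rewrite mem_iota add0n ltnS leq_divRL // => hi ->; split.
    lia.
  by rewrite addnC mulnC modnMDl modn_small.
move=> [xv /eqP xr]; exists (x %/ t).
  rewrite mem_iota add0n ltnS leq0n /= leq_divRL //.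
  have := divn_eq x t; lia.
by have := divn_eq x t; rewrite xr mulnC; lia.
Qed.

Lemma col_uniq t v r : 0 < t -> uniq (col t v r).
Proof.
move=> t0; rewrite /col map_inj_uniq ?iota_uniq // => i j /addnI/eqP.
by rewrite eqn_pmul2l // => /eqP.
Qed.

Lemma count_build t v up sg x :
  count_mem x (build t v up sg) = sumn [seq count_mem x (col t v r) | r <- sg].
Proof.
elim: sg up => [|r sg IH] up //=.
by rewrite count_cat IH /ocol; case: up; rewrite ?count_rev.
Qed.

Lemma sumn_bool (P : bool) y (sg : seq nat) :
  sumn [seq nat_of_bool (P && (r == y)) | r <- sg] = P * count_mem y sg.
Proof.
elim: sg => [|r sg IH] /=; first by rewrite muln0.
by rewrite IH; case: (P); rewrite ?mul1n ?mul0n.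
Qed.

Lemma perm_build t v up sg : 0 < t -> t <= v -> perm_eq sg (iota 0 t) ->
  perm_eq (build t v up sg) (iota 0 v).
Proof.
move=> t0 tv psg; apply: perm_of_count => x.
rewrite count_build.
have -> : [seq count_mem x (col t v r) | r <- sg] =
          [seq nat_of_bool ((x < v) && (r == x %% t)) | r <- sg].
  apply/eq_in_map => r; rewrite (perm_mem psg) mem_iota => /andP[_ hr].
  rewrite count_uniq_mem ?col_uniq // col_mem //; last by lia.
  by rewrite eq_sym.
rewrite sumn_bool.
move/permP: psg => ->.
rewrite !count_uniq_mem ?iota_uniq // !mem_iota /= ltn_pmod // muln1.
done.
Qed.

Lemma jumps_const t v H up sg : all (fun r => kk t v r == H) sg ->
  jumps t v up sg = diffs sg.
Proof.
elim: sg up => [|r sg IH] up //.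
case: sg IH => [|r' sg] IH // hall.
have /and3P[/eqP h1 /eqP h2 hs] : [&& kk t v r == H, kk t v r' == H &
   all (fun r => kk t v r == H) sg] by [].
have -> : jumps t v up [:: r, r' & sg] = absdiff (if up then top t v r else r)
  (if up then top t v r' else r') :: jumps t v (~~ up) (r' :: sg) by [].
rewrite (IH (~~ up)); last by rewrite /= h2 eqxx hs.
by case: up; rewrite // /top h1 h2 absdiffDr.
Qed.

Lemma jumps_cross t v H1 H2 X Y : all (fun r => kk t v r == H1) X ->
  all (fun r => kk t v r == H2) Y -> X != [::] ->
  jumps t v (~~ odd (size X)) (X ++ Y) = diffs (X ++ Y).
Proof.
move=> hX hY; elim: X hX => [|x X IH] // hX _.
case: X IH hX => [|x' X] IH hX.
  clear IH; case: Y hY => [|y Y] hY //.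
  have -> : jumps t v (~~ odd (size [:: x])) (x :: y :: Y) =
    absdiff x y :: jumps t v true (y :: Y) by [].
  by rewrite (jumps_const _ _ _ _ _ hY).
have /and3P[/eqP h1 /eqP h2 hs] : [&& kk t v x == H1, kk t v x' == H1 &
  all (fun r => kk t v r == H1) X] by [].
have -> : jumps t v (~~ odd (size [:: x, x' & X])) ([:: x, x' & X] ++ Y) =
  absdiff (if ~~ odd (size X) then top t v x else x)
    (if ~~ odd (size X) then top t v x' else x')
  :: jumps t v (~~ odd (size (x' :: X))) ((x' :: X) ++ Y).
  by rewrite /=; case: (odd (size X)).
rewrite IH //; last by rewrite /= h2 eqxx hs.
by case: (odd (size X)); rewrite // /top h1 h2 absdiffDr.
Qed.

Lemma kk_lo t v r : 0 < t -> r < v %% t -> kk t v r = v %/ t.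
Proof.
move=> t0 hr; rewrite /kk.
have E := divn_eq v t; have st := ltn_pmod v t0.
have -> : v.-1 - r = v %/ t * t + ((v %% t).-1 - r).
  move: E st hr; generalize (v %/ t * t) (v %% t) => M S; lia.
rewrite divnMDl // (@divn_small ((v %% t).-1 - r)) ?addn0 //; move: st; generalize (v %% t) => S; lia.
Qed.

Lemma kk_hi t v r : 0 < t -> t <= v -> v %% t <= r -> r < t -> kk t v r = (v %/ t).-1.
Proof.
move=> t0 tv h1 h2; rewrite /kk.
have E := divn_eq v t; have st := ltn_pmod v t0.
case Em: (v %/ t) E => [|m] E.
  rewrite mul0n add0n in E; move: E st tv; generalize (v %% t) => S; lia.
rewrite mulSn in E.
have -> : v.-1 - r = m * t + (t + (v %% t) - 1 - r).
  move: E st h1 h2; generalize (m * t) (v %% t) => M S; lia.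
rewrite divnMDl // (@divn_small (t + (v %% t) - 1 - r)) ?addn0 //; move: st h1 h2; generalize (v %% t) => S; lia.
Qed.

Lemma size_build t v up sg : size (build t v up sg) = sumn [seq kk t v r | r <- sg] + size sg.
Proof.
elim: sg up => [|r sg IH] up //=.
rewrite size_cat IH /ocol; case: up; rewrite ?size_rev size_map size_iota; lia.
Qed.

Theorem proposition4p1 (t a b c : nat) :
  4 <= t -> ~~ odd t -> 2 <= a -> 0 < b -> 0 < c -> a + b = t - 1 ->
  exists s : seq nat, linear_realization (ms12t a b t c) s.
Proof.
move=> ht _ ha hb hc hab.
have sz : size (ms12t a b t c) = a + b + c by rewrite /ms12t !size_cat !size_nseq addnA.
rewrite /linear_realization sz.
set v := (a + b + c).+1.
have t0 : 0 < t by lia.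
have [X [Y [Xne pXY allX allY dXY]]] := @sigma_ex t (v %% t) b ht (ltn_pmod _ t0) hb ltac:(lia).
have pB := @perm_build t v (~~ odd (size X)) (X ++ Y) t0 ltac:(lia) pXY.
exists (build t v (~~ odd (size X)) (X ++ Y)); split => //.
apply: perm_trans (diffs_build _ _ _ _) _.
have memt r : r \in X ++ Y -> r < t by rewrite (perm_mem pXY) mem_iota.
rewrite (@jumps_cross t v (v %/ t).-1 (v %/ t)); last first.
- exact: Xne.
- apply/allP => r hr; rewrite kk_lo //; exact: (allP allY).
- apply/allP => r hr; rewrite kk_hi //; [lia | exact: (allP allX) | apply: memt; by rewrite mem_cat hr].
have szb := perm_size pB; rewrite size_build size_iota (perm_size pXY) size_iota in szb.
have -> : sumn [seq kk t v r | r <- X ++ Y] = c by lia.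
rewrite perm_catC /ms12t catA; apply: perm_cat => //.
by have <- : t.-1 - b = a by lia.
Qed.
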